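(* Let $P$ be a poset and let $2\leq\alpha,\beta\leq\omega$. If $P$ is $(\alpha,\beta)$-representable, then $\exists$ has an $\omega$-strategy in the $(\alpha,\beta)$-game with starting position $(\{p\},\{q\})$ for all $p,q\in P$ with $p\not\leq q$. Moreover, if $P$ is countable, then the converse holds.
   Context: A poset $P$ is $(\alpha,\beta)$-representable if there is a set $X$ and an order embedding $h:P\to\wp(X)$ ($\wp(X)$ ordered by inclusion) such that whenever $S\subseteq P$ with $|S|<\alpha$ and $\bigwedge S$ exists in $P$ then $h(\bigwedge S)=\bigcap h[S]$ (with $\bigcap\emptyset=X$), and whenever $T\subseteq P$ with $|T|<\beta$ and $\bigvee T$ exists in $P$ then $h(\bigvee T)=\bigcup h[T]$. The $(\alpha,\beta)$-game on $P$ with starting position $(U_0,V)$, $U_0,V\subseteq P$, is played between $\forall$ and $\exists$ in rounds $0,1,2,\ldots$; a set $U$ is maintained, initially $U_0$, with $V$ fixed. In each round $\forall$ moves and then $\exists$ responds: (1) if $b\geq a$ for some $a\in U$, $\forall$ may play $(b)$ and $\exists$ must add $b$ to $U$; (2) if $A\subseteq U$ with $|A|<\alpha$ and $\bigwedge A$ exists in $P$, $\forall$ may play $A$ and $\exists$ must add $\bigwedge A$ to $U$; (3) if $B\subseteq P$ with $|B|<\beta$ and $\bigvee B$ exists in $P$ and lies in $U$, $\forall$ may play $B$ and $\exists$ must choose some $b\in B$ and add it to $U$. $\forall$ wins in round $n$ if $U\cap V\neq\emptyset$ at the beginning of round $n$. $\exists$ has an $\omega$-strategy if she can guarantee that $\forall$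 never wins, however he plays. *)

(* Defs.v *)
From Stdlib Require List.
From mathcomp Require Import all_boot all_order.
Set Implicit Arguments. Unset Strict Implicit. Unset Printing Implicit Defensive.
Import Order.TTheory.
Local Open Scope order_scope.

(* Cardinal bounds alpha with 2 <= alpha <= omega:  Some n  is the finite
   cardinal n, None is omega. *)
Definition cbound := option nat.
Definition valid_bound (a : cbound) : Prop :=
  match a with Some n => (2 <= n)%N | None => True end.

Definition card_lt {T : Type} (S : T -> Prop) (a : cbound) : Prop :=
  match a with
  | Some n => exists l : list T, (size l < n)%N /\ forall x, S x -> List.In x l
  | None => exists l : list T, forall x, S x -> List.In x l
  end.

Section Poset.
Context {d : Order.disp_t} {P : porderType d}.

Definition is_glb (S : P -> Prop) (m : P) : Prop :=
  (forall s, S s -> m <= s) /\ (forall l, (forall s, S s -> l <= s) -> l <= m).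
Definition is_lub (S : P -> Prop) (j : P) : Prop :=
  (forall s, S s -> s <= j) /\ (forall u, (forall s, S s -> s <= u) -> j <= u).

Definition representable (a b : cbound) : Prop :=
  exists (X : Type) (h : P -> X -> Prop),
    (forall p q : P, p <= q <-> (forall x, h p x -> h q x)) /\
    (forall (S : P -> Prop) (m : P), card_lt S a -> is_glb S m ->
       forall x, h m x <-> (forall s, S s -> h s x)) /\
    (forall (T : P -> Prop) (j : P), card_lt T b -> is_lub T j ->
       forall x, h j x <-> (exists t, T t /\ h t x)).

Inductive move : Type :=
  | MUp of P
  | MMeet of (P -> Prop)
  | MJoin of (P -> Prop).

Definition legal_move (a b : cbound) (U : P -> Prop) (mv : move) : Prop :=
  match mv with
  | MUp c => exists u, U u /\ u <= c
  | MMeet A => (forall x, A x -> U x) /\ card_lt A a /\ exists m, is_glb A m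
  | MJoin B => card_lt B b /\ exists j, is_lub B j /\ U j
  end.

Definition legal_resp (mv : move) (r : P) : Prop :=
  match mv with
  | MUp c => r = c
  | MMeet A => is_glb A r
  | MJoin B => B r
  end.

(* A strategy for exists: given the history of the play (forall's moves with
   the elements added) and forall's current move, the element to add. *)
Definition strategy := list (move * P) -> move -> P.

Fixpoint history (sigma : strategy) (ms : nat -> move) (n : nat)
  : list (move * P) :=
  match n with
  | 0 => nil
  | k.+1 => let h := history sigma ms k in
            h ++ ((ms k, sigma h (ms k)) :: nil)
  end.

Definition position (U0 : P -> Prop) (h : list (move * P)) (x : P) : Prop :=
  U0 x \/ exists mv, List.In (mv, x) h.

(* exists has an omega-strategy in the (a,b)-game starting at (U0,V):
   a strategy such that, as long as forall has played legally, exists'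
   responses are legal and U never meets V (at the beginning of any round). *)
Definition E_omega_strategy (a b : cbound) (U0 V : P -> Prop) : Prop :=
  exists sigma : strategy, forall (ms : nat -> move) (n : nat),
    (forall k, (k < n)%N ->
       legal_move a b (position U0 (history sigma ms k)) (ms k)) ->
    (forall k, (k < n)%N -> legal_resp (ms k) (sigma (history sigma ms k) (ms k))) /\
    (forall x, position U0 (history sigma ms n) x -> ~ V x).

End Poset.

Definition countable_type (T : Type) : Prop :=
  exists f : T -> nat, forall x y, f x = f y -> x = y.

(* Main.v *)
Require Import Defs.
From mathcomp Require Import all_boot all_order.
From Stdlib Require Import Classical ClassicalEpsilon.
From Stdlib Require List.
From mathcomp Require Import zify.

Section Gen.
Context {d : Order.disp_t} {P : porderType d}.
Local Open Scope order_scope.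
Import Order.TTheory.

Lemma position_snoc (U0 : P -> Prop) hs m r y :
  position U0 (hs ++ (m, r) :: nil) y <-> position U0 hs y \/ y = r.
Proof.
  unfold position; split.
  - intros [H|[mv Hin]]; [left; left; exact H|].
    apply List.in_app_or in Hin as [Hin|Hin]; [left; right; exists mv; exact Hin|].
    destruct Hin as [E|[]]; inversion E; subst; right; reflexivity.
  - intros [[H|[mv Hin]]|E]; [left; exact H| right; exists mv; apply List.in_or_app; left; exact Hin|].
    subst; right; exists m; apply List.in_or_app; right; left; reflexivity.
Qed.

Section Fwd.
Variables (a b : cbound) (X : Type) (h : P -> X -> Prop).
Hypothesis Hemb : forall p q : P, p <= q <-> (forall x, h p x -> h q x).
Hypothesis Hmeet : forall (S : P -> Prop) (m : P), card_lt S a -> is_glb S m ->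
       forall x, h m x <-> (forall s, S s -> h s x).
Hypothesis Hjoin : forall (T : P -> Prop) (j : P), card_lt T b -> is_lub T j ->
       forall x, h j x <-> (exists t, T t /\ h t x).

Lemma fwd (p q : P) : ~ (p <= q) -> E_omega_strategy a b (fun x => x = p) (fun x => x = q).
Proof.
  intros Hpq.
  assert (Hx : exists x, h p x /\ ~ h q x).
  { apply NNPP; intro Hn. apply Hpq. apply Hemb. intros x Hp. apply NNPP; intro Hq. apply Hn; exists x; auto. }
  destruct Hx as [x [Hpx Hqx]].
  set (sigma := fun (_ : list (@move d P * P)) (mv : @move d P) => epsilon (inhabits p) (fun r => legal_resp mv r /\ h r x)).
  exists sigma. intros ms n.
  enough (forall n', (forall k, (k < n')%N -> legal_move a b (position (fun x => x = p) (history sigma ms k)) (ms k)) -> (forall k, (k < n')%N -> legal_resp (ms k) (sigma (history sigma ms k) (ms k))) /\ (forall y, position (fun x => x = p) (history sigma ms n') y -> h y x)) as Hgen.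
  { intros Hl; destruct (Hgen n Hl) as [H1 H2]; split; [exact H1|]. intros y Hy E; subst y; exact (Hqx (H2 _ Hy)). }
  induction n' as [|n' IH]; intros Hl.
  - split; [intros k Hk; discriminate|]. intros y [E|[mv Hin]]; [subst; exact Hpx| destruct Hin].
  - destruct IH as [IH1 IH2]. { intros k Hk; apply Hl; lia. }
    assert (Hex : exists r, legal_resp (ms n') r /\ h r x).
    { specialize (Hl n' (ltnSn n')). destruct (ms n') as [c|A|B]; simpl in Hl |- *.
      - destruct Hl as [u [Hu Huc]]. exists c; split; [reflexivity|]. apply (proj1 (Hemb u c) Huc); apply IH2; exact Hu.
      - destruct Hl as [HA [Hc [m Hm]]]. exists m; split; [exact Hm|]. apply (proj2 (Hmeet _ _ Hc Hm x)). intros s Hs; apply IH2, HA, Hs.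
      - destruct Hl as [Hc [j [Hj HU]]]. destruct (proj1 (Hjoin _ _ Hc Hj x) (IH2 _ HU)) as [t [Ht Htx]]. exists t; split; assumption. }
    pose proof (epsilon_spec (inhabits p) _ Hex) as Hspec.
    change (legal_resp (ms n') (sigma (history sigma ms n') (ms n')) /\ h (sigma (history sigma ms n') (ms n')) x) in Hspec.
    split.
    + intros k Hk. rewrite ltnS leq_eqVlt in Hk. case/orP: Hk => [/eqP -> | Hk]. exact (proj1 Hspec). exact (IH1 k Hk).
    + intros y Hy. change (position (fun x => x = p) (history sigma ms n' ++ (ms n', sigma (history sigma ms n') (ms n')) :: nil) y) in Hy.
      apply position_snoc in Hy. destruct Hy as [Hy|E]; [exact (IH2 _ Hy)| subst y; exact (proj2 Hspec)].
Qed.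
End Fwd.
End Gen.
Lemma inj_unbounded (F : nat -> nat) (HF : injective F) N : exists j, (N <= F j)%N.
Proof.
  apply NNPP; intro Hn.
  have Hlt: forall j, (F j < N)%N.
  { intro j; rewrite ltnNge; apply/negP; intro H; apply Hn; exists j; exact H. }
  have U: uniq (map F (iota 0 N.+1)) by rewrite map_inj_uniq // iota_uniq.
  have S: {subset map F (iota 0 N.+1) <= iota 0 N}.
  { move=> y /mapP [j _ ->]; rewrite mem_iota /= add0n; exact: Hlt. }
  have := uniq_leq_size U S. by rewrite size_map !size_iota ltnn.
Qed.

Section Conv.
Context {d : Order.disp_t} {P : porderType d}.
Local Open Scope order_scope.
Import Order.TTheory.
Variables (a b : cbound) (f : P -> nat) (p : P) (sigma : @strategy d P).
Hypothesis Hf : forall x y, f x = f y -> x = y.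

Definition g (n : nat) : P := epsilon (inhabits p) (fun x => f x = n).
Lemma gK x : g (f x) = x.
Proof. unfold g. apply Hf. apply (epsilon_spec (inhabits p) (fun y => f y = f x)). exists x; reflexivity. Qed.

Definition code := ((nat * seq nat) * nat)%type.
Definition decode_move (c : nat * seq nat) : @move d P :=
  let L := map g c.2 in
  match c.1 with
  | 0 => MUp (head p L)
  | 1 => MMeet (fun x => List.In x L)
  | _ => MJoin (fun x => List.In x L)
  end.
Definition cand (k : nat) : @move d P :=
  match (unpickle k : option code) with Some c => decode_move c.1 | None => MUp p end.
Definition U0 := fun x : P => x = p.
Definition choose_move (hs : list (@move d P * P)) (k : nat) : @move d P :=
  if excluded_middle_informative (legal_move a b (position U0 hs) (cand k)) then cand k else MUp p.
Fixpoint hist (k : nat) : list (@move d P * P) :=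
  match k with 0 => nil | k'.+1 => hist k' ++ ((choose_move (hist k') k', sigma (hist k') (choose_move (hist k') k')) :: nil) end.
Definition ms k := choose_move (hist k) k.

Lemma hist_eq k : history sigma ms k = hist k.
Proof. induction k as [|k IH]; [reflexivity|]. simpl. rewrite IH. reflexivity. Qed.

Lemma legal_all k : legal_move a b (position U0 (hist k)) (ms k).
Proof.
  unfold ms, choose_move. destruct (excluded_middle_informative _) as [H|H]; [exact H|].
  simpl. exists p; split; [left; reflexivity| exact (lexx p)].
Qed.

Lemma legal_mono (U U' : P -> Prop) mv : (forall x, U x -> U' x) -> legal_move a b U mv -> legal_move a b U' mv.
Proof.
  intros HU; destruct mv as [c|A|B]; simpl.
  - intros [u [Hu Hc]]; exists u; auto.
  - intros [HA Hr]; split; auto.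
  - intros [Hc [j [Hj Hu]]]; split; [exact Hc|]; exists j; auto.
Qed.

Definition Uw x := exists n, position U0 (hist n) x.

Lemma hist_mono n m : (n <= m)%N -> exists s, hist m = hist n ++ s.
Proof.
  intros H. induction m as [|m IH].
  - exists nil. destruct n; [reflexivity|discriminate].
  - rewrite leq_eqVlt in H. case/orP: H => [/eqP -> | H]. exists nil; rewrite cats0; reflexivity.
    destruct (IH H) as [s Hs]. simpl. rewrite Hs. eexists. rewrite -catA. reflexivity.
Qed.

Lemma pos_mono n m x : (n <= m)%N -> position U0 (hist n) x -> position U0 (hist m) x.
Proof.
  intros H Hx. destruct (@hist_mono n m H) as [s Hs]. rewrite Hs. destruct Hx as [Hx|[mv Hin]]; [left; exact Hx|].
  right; exists mv; apply List.in_or_app; left; exact Hin.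
Qed.

Lemma resp_in k : position U0 (hist k.+1) (sigma (hist k) (ms k)).
Proof. right. exists (ms k). simpl. apply List.in_or_app; right; left; reflexivity. Qed.

Variable q : P.
Hypothesis Hwin : forall (ms : nat -> move) (n : nat),
    (forall k, (k < n)%N ->
       legal_move a b (position U0 (history sigma ms k)) (ms k)) ->
    (forall k, (k < n)%N -> legal_resp (ms k) (sigma (history sigma ms k) (ms k))) /\
    (forall x, position U0 (history sigma ms n) x -> ~ (x = q)).

Lemma win n : (forall k, (k < n)%N -> legal_resp (ms k) (sigma (hist k) (ms k))) /\
   (forall x, position U0 (hist n) x -> x <> q).
Proof.
  destruct (Hwin ms n) as [H1 H2].
  - intros k _; rewrite hist_eq; apply legal_all.
  - split; [intros k Hk; rewrite <- hist_eq; apply H1, Hk| intros x Hx; rewrite <- hist_eq in Hx; apply H2, Hx].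
Qed.

Lemma resp_legal k : legal_resp (ms k) (sigma (hist k) (ms k)).
Proof. apply (proj1 (win k.+1)). apply ltnSn. Qed.

Lemma Uw_q : ~ Uw q.
Proof. intros [n Hn]. exact (proj2 (win n) q Hn erefl). Qed.

Lemma Uw_p : Uw p.
Proof. exists 0; left; reflexivity. Qed.

Lemma often (c : nat * seq nat) N : exists k, (N <= k)%N /\ cand k = decode_move c.
Proof.
  have Hinj : injective (fun j => pickle ((c, j) : code)).
  { intros j1 j2 E. apply (pcan_inj pickleK) in E. injection E; auto. }
  destruct (@inj_unbounded _ Hinj N) as [j Hj]. exists (pickle ((c, j) : code)); split; [exact Hj|].
  unfold cand. rewrite pickleK. reflexivity.
Qed.

Lemma play (c : nat * seq nat) n : legal_move a b (position U0 (hist n)) (decode_move c) ->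
  exists k, legal_resp (decode_move c) (sigma (hist k) (ms k)) /\ Uw (sigma (hist k) (ms k)).
Proof.
  intros Hl. destruct (often c n) as [k [Hk Hc]].
  assert (Hms : ms k = decode_move c).
  { unfold ms, choose_move. destruct (excluded_middle_informative _) as [H|H]; [exact Hc|].
    exfalso; apply H. rewrite Hc. apply (@legal_mono (position U0 (hist n))); [|exact Hl].
    intros x; apply pos_mono, Hk. }
  exists k; split; [rewrite <- Hms; apply resp_legal| exists k.+1; apply resp_in].
Qed.

Lemma list_in (L : list P) : (forall x, List.In x L -> Uw x) -> exists n, forall x, List.In x L -> position U0 (hist n) x.
Proof.
  induction L as [|y L IH]; intros H.
  - exists 0; intros x [].
  - destruct IH as [n Hn]. { intros x Hx; apply H; right; exact Hx. }
    destruct (H y (or_introl erefl)) as [m Hm].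
    exists (maxn n m). intros x [E|Hx].
    + subst x. apply (@pos_mono m); [apply leq_maxr| exact Hm].
    + apply (@pos_mono n); [apply leq_maxl| apply Hn, Hx].
Qed.

Lemma filter_list (S : P -> Prop) (l : list P) : exists L : list P, (size L <= size l)%N /\ forall x, List.In x L <-> S x /\ List.In x l.
Proof.
  induction l as [|y l IH].
  - exists nil; split; [done|]. intros x; simpl; tauto.
  - destruct IH as [L [HL HI]]. destruct (classic (S y)) as [Hy|Hy].
    + exists (y :: L); split; [simpl; lia|]. intros x; simpl; rewrite HI. split; [intros [E|[H1 H2]]; [subst; tauto| tauto]| tauto].
    + exists L; split; [simpl; lia|]. intros x; simpl; rewrite HI. split; [tauto|]. intros [H1 [E|H2]]; [subst; tauto| tauto].
Qed.

Lemma card_filter (S : P -> Prop) (c : cbound) : card_lt S c ->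
  exists L : list P, card_lt (fun x => List.In x L) c /\ forall x, List.In x L <-> S x.
Proof.
  intros Hc.
  destruct c as [n|]; destruct Hc as [l Hl].
  - destruct Hl as [Hs Hl]. destruct (filter_list S l) as [L [HL HI]].
    exists L; split; [exists L; split; [lia| auto]|].
    intros x; rewrite HI; split; [tauto| intros Hx; split; auto].
  - destruct (filter_list S l) as [L [HL HI]].
    exists L; split; [exists L; auto|].
    intros x; rewrite HI; split; [tauto| intros Hx; split; auto].
Qed.

Lemma Uw_up u c : Uw u -> u <= c -> Uw c.
Proof.
  intros [n Hn] Huc.
  destruct (@play (0, f c :: nil) n) as [k [Hr Hk]].
  - simpl. rewrite gK. exists u; split; assumption.
  - simpl in Hr. rewrite gK in Hr. rewrite <- Hr. exact Hk.
Qed.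

Lemma glb_ext (A B : P -> Prop) m : (forall x, A x <-> B x) -> is_glb A m -> is_glb B m.
Proof.
  intros E [H1 H2]; split; [intros s Hs; apply H1, E, Hs|intros l Hl; apply H2; intros s Hs; apply Hl, E, Hs].
Qed.
Lemma lub_ext (A B : P -> Prop) m : (forall x, A x <-> B x) -> is_lub A m -> is_lub B m.
Proof.
  intros E [H1 H2]; split; [intros s Hs; apply H1, E, Hs|intros l Hl; apply H2; intros s Hs; apply Hl, E, Hs].
Qed.

Lemma Uw_meet (S : P -> Prop) m : card_lt S a -> is_glb S m -> (forall s, S s -> Uw s) -> Uw m.
Proof.
  intros Hc Hm HS. destruct (@card_filter _ _ Hc) as [L [HcL HL]].
  destruct (@list_in L) as [n Hn]. { intros x Hx; apply HS, HL, Hx. }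
  destruct (@play (1, map f L) n) as [k [Hr Hk]].
  - simpl. rewrite -map_comp (eq_map gK) map_id. split; [exact Hn|]. split; [exact HcL|].
    exists m; apply (@glb_ext S); [intros x; rewrite HL; tauto| exact Hm].
  - simpl in Hr. rewrite -map_comp (eq_map gK) map_id in Hr.
    assert (E : sigma (hist k) (ms k) = m).
    { apply (@glb_ext _ S) in Hr; [|exact HL]. destruct Hr as [R1 R2]; destruct Hm as [M1 M2].
      apply/le_anti/andP; split; [apply M2, R1| apply R2, M1]. }
    rewrite <- E; exact Hk.
Qed.

Lemma Uw_join (T : P -> Prop) j : card_lt T b -> is_lub T j -> Uw j -> exists t, T t /\ Uw t.
Proof.
  intros Hc Hj [n Hn]. destruct (@card_filter _ _ Hc) as [L [HcL HL]].
  destruct (@play (2, map f L) n) as [k [Hr Hk]].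
  - simpl. rewrite -map_comp (eq_map gK) map_id. split; [exact HcL|].
    exists j; split; [apply (@lub_ext T); [intros x; rewrite HL; tauto| exact Hj]| exact Hn].
  - simpl in Hr. rewrite -map_comp (eq_map gK) map_id in Hr.
    exists (sigma (hist k) (ms k)); split; [apply HL, Hr| exact Hk].
Qed.
End Conv.

Theorem proposition5p2 (d : Order.disp_t) (P : porderType d)
  (alpha beta : cbound) :
  valid_bound alpha -> valid_bound beta ->
  (@representable d P alpha beta ->
     forall p q : P, ~ (p <= q)%O ->
       E_omega_strategy alpha beta (fun x => x = p) (fun x => x = q)) /\
  (countable_type P ->
     (forall p q : P, ~ (p <= q)%O ->
        E_omega_strategy alpha beta (fun x => x = p) (fun x => x = q)) ->
     @representable d P alpha beta).
Proof.
  intros _ _. split.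
  - intros [X [h [H1 [H2 H3]]]] p q Hpq. exact (@fwd _ _ _ _ _ _ H1 H2 H3 _ _ Hpq).
  - intros [f Hf] Hstrat.
    pose (sig_of := fun (x : {pq : P * P | ~ (pq.1 <= pq.2)%O}) =>
      proj1_sig (constructive_indefinite_description _ (Hstrat _ _ (proj2_sig x)))).
    assert (Hw : forall x, forall (ms : nat -> move) (n : nat),
    (forall k, (k < n)%N ->
       legal_move alpha beta (position (U0 (proj1_sig x).1) (history (sig_of x) ms k)) (ms k)) ->
    (forall k, (k < n)%N -> legal_resp (ms k) (sig_of x (history (sig_of x) ms k) (ms k))) /\
    (forall y, position (U0 (proj1_sig x).1) (history (sig_of x) ms n) y -> ~ (y = (proj1_sig x).2))).
    { intros x. exact (proj2_sig (constructive_indefinite_description _ (Hstrat _ _ (proj2_sig x)))). }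
    exists {pq : P * P | ~ (pq.1 <= pq.2)%O}.
    exists (fun r x => Uw alpha beta f (proj1_sig x).1 (sig_of x) r).
    split; [|split].
    + intros p' q'. split.
      * intros Hle x Hx. exact (Uw_up _ _ _ _ _ Hf _ (Hw x) _ _ Hx Hle).
      * intros H. destruct (p' <= q')%O eqn:E; [reflexivity|].
        assert (Hn : ~ (p' <= q')%O) by (rewrite E; discriminate).
        pose (x := exist (fun pq : P * P => ~ (pq.1 <= pq.2)%O) (p', q') Hn).
        exfalso. apply (Uw_q alpha beta f _ _ _ (Hw x)).
        apply (H x). apply Uw_p.
    + intros S m Hc Hm x. split.
      * intros Hx s Hs. exact (Uw_up _ _ _ _ _ Hf _ (Hw x) _ _ Hx (proj1 Hm s Hs)).
      * intros Hs. exact (Uw_meet _ _ _ _ _ Hf _ (Hw x) _ _ Hc Hm Hs).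
    + intros T j Hc Hj x. split.
      * intros Hx. exact (Uw_join _ _ _ _ _ Hf _ (Hw x) _ _ Hc Hj Hx).
      * intros [t [Ht Hx]]. exact (Uw_up _ _ _ _ _ Hf _ (Hw x) _ _ Hx (proj1 Hj t Ht)).
Qed.
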